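(* Let $c^1,\ldots,c^M$ and $s^1,\ldots,s^M$ be sequences of customer and server types whose FCFS matching $A$ is perfect. Define the exchanged sequences by $\tilde{s}^m=s^n$ and $\tilde{c}^n=c^m$ for each $(m,n)\in A$, and let $\tilde{A}=\{(n,m):(m,n)\in A\}$ (pairing $\tilde{c}^n$ with $\tilde{s}^m$). Then $\tilde{A}$ is the unique complete FCFS matching of $(\tilde{c}^n)_{n=1}^M$ and $(\tilde{s}^m)_{m=1}^M$ in reversed time, i.e. with respect to the reversed order of indices $M,M-1,\ldots,1$: for every $(n,m)\in\tilde{A}$, each $k>m$ with $(\tilde{c}^n,\tilde{s}^k)\in\mathcal{E}$ satisfies $(l,k)\in\tilde{A}$ for some $l>n$, and each $l>n$ with $(\tilde{c}^l,\tilde{s}^m)\in\mathcal{E}$ satisfies $(l,k)\in\tilde{A}$ for some $k>m$.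
   Context: Let $\mathcal{C}$ and $\mathcal{S}$ be finite sets of customer and server types and $G=(\mathcal{C},\mathcal{S},\mathcal{E})$ a connected bipartite compatibility graph. The FCFS matching of finite sequences $(c^m)$, $(s^n)$ is the unique set $A$ of index pairs with $(m,n)\in A\Rightarrow(c^m,s^n)\in\mathcal{E}$, each index in at most one pair, no unmatched compatible pair left, and such that for every $(m,n)\in A$, every $l<n$ with $(c^m,s^l)\in\mathcal{E}$ is matched to some $k<m$ and every $k<m$ with $(c^k,s^n)\in\mathcal{E}$ is matched to some $l<n$. It is perfect if every customer and every server is matched. *)

(* Defs.v *)
From mathcomp Require Import all_boot.
Set Implicit Arguments. Unset Strict Implicit. Unset Printing Implicit Defensive.

Definition bip_adj (C S : finType) (E : C -> S -> bool) : rel (C + S) :=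
  fun u v => match u, v with
             | inl x, inr y => E x y
             | inr y, inl x => E x y
             | _, _ => false
             end.

Definition bip_connected (C S : finType) (E : C -> S -> bool) : Prop :=
  forall u v : C + S, connect (bip_adj E) u v.

(* FCFS matching of c : 'I_Mc -> C and s : 'I_Ms -> S, with respect to
   "strictly earlier" relations befc (on customer indices) and befs (on
   server indices). *)
Definition fcfs_wrt (C S : finType) (E : C -> S -> bool) (Mc Ms : nat)
  (befc : rel 'I_Mc) (befs : rel 'I_Ms)
  (c : 'I_Mc -> C) (s : 'I_Ms -> S) (A : {set 'I_Mc * 'I_Ms}) : Prop :=
  [/\ (forall m n, (m, n) \in A -> E (c m) (s n)),
      (forall m n n', (m, n) \in A -> (m, n') \in A -> n = n'),
      (forall m m' n, (m, n) \in A -> (m', n) \in A -> m = m'),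
      (forall m n, E (c m) (s n) ->
         (exists n', (m, n') \in A) \/ (exists m', (m', n) \in A))
    & (forall m n, (m, n) \in A ->
         (forall l, befs l n -> E (c m) (s l) ->
            exists k, befc k m /\ (k, l) \in A) /\
         (forall k, befc k m -> E (c k) (s n) ->
            exists l, befs l n /\ (k, l) \in A))].

Definition fcfs (C S : finType) (E : C -> S -> bool) (Mc Ms : nat)
  (c : 'I_Mc -> C) (s : 'I_Ms -> S) (A : {set 'I_Mc * 'I_Ms}) : Prop :=
  fcfs_wrt E (fun k m => k < m) (fun l n => l < n) c s A.

Definition fcfs_rev (C S : finType) (E : C -> S -> bool) (Mc Ms : nat)
  (c : 'I_Mc -> C) (s : 'I_Ms -> S) (A : {set 'I_Mc * 'I_Ms}) : Prop :=
  fcfs_wrt E (fun k m => m < k) (fun l n => n < l) c s A.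

Definition perfect (Mc Ms : nat) (A : {set 'I_Mc * 'I_Ms}) : Prop :=
  (forall m, exists n, (m, n) \in A) /\ (forall n, exists m, (m, n) \in A).

(* Main.v *)
Require Import Defs.
From mathcomp Require Import all_boot.
From mathcomp Require Import zify.

Lemma inAt (T1 T2 : finType) (A : {set T1 * T2}) n m :
  ((n,m) \in [set (x.2, x.1) | x in A]) = ((m,n) \in A).
Proof.
apply/imsetP/idP => [[[a b] h [-> ->]] //|h].
by exists (m,n).
Qed.

Lemma fcfs_uniq_dir (C S : finType) (E : C -> S -> bool) Mc Ms (befc : rel 'I_Mc) (befs : rel 'I_Ms) (c : 'I_Mc -> C) (s : 'I_Ms -> S)
  (B B' : {set 'I_Mc * 'I_Ms}) (wc : 'I_Mc -> nat) (ws : 'I_Ms -> nat) :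
  (forall k m, befc k m -> wc k < wc m) -> (forall l n, befs l n -> ws l < ws n) ->
  (forall n n', n != n' -> befs n n' \/ befs n' n) ->
  (forall m m', m != m' -> befc m m' \/ befc m' m) ->
  fcfs_wrt E befc befs c s B -> fcfs_wrt E befc befs c s B' ->
  forall m n, (forall k l, wc k + ws l < wc m + ws n -> ((k,l)\in B) = ((k,l) \in B')) ->
  (m,n) \in B -> (m,n) \in B'.
Proof.
move=> hwc hws ts tc [e1 f1 g1 x1 h1] [e2 f2 g2 x2 h2] m n IH mnB.
case: (boolP ((m,n) \in B')) => // nB'.
have emn := e1 _ _ mnB.
have [hl hk] := h1 _ _ mnB.
case: (x2 _ _ emn) => [[n' mn'B'] | [m' m'nB']].
- have nn' : n != n'.
    by apply/eqP => eq; subst; rewrite mn'B' in nB'.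
  have [hl2 hk2] := h2 _ _ mn'B'.
  case: (ts _ _ nn') => bef.
  + have [k [bk kn]] := hl2 n bef emn.
    have lt := hwc _ _ bk.
    rewrite -IH in kn; last by lia.
    have eq := g1 _ _ _ mnB kn; subst; by rewrite ltnn in lt.
  + have [k [bk kn]] := hl n' bef (e2 _ _ mn'B').
    have lt := hwc _ _ bk. have lt2 := hws _ _ bef.
    rewrite IH in kn; last by lia.
    have eq := g2 _ _ _ mn'B' kn; subst; by rewrite ltnn in lt.
- have mm' : m != m'.
    by apply/eqP => eq; subst; rewrite m'nB' in nB'.
  have [hl2 hk2] := h2 _ _ m'nB'.
  case: (tc _ _ mm') => bef.
  + have [l [bl ml]] := hk2 m bef emn.
    have lt := hws _ _ bl.
    rewrite -IH in ml; last by lia.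
    have eq := f1 _ _ _ mnB ml; subst; by rewrite ltnn in lt.
  + have [l [bl ml]] := hk m' bef (e2 _ _ m'nB').
    have lt := hws _ _ bl. have lt2 := hwc _ _ bef.
    rewrite IH in ml; last by lia.
    have eq := f2 _ _ _ m'nB' ml; subst; by rewrite ltnn in lt.
Qed.

Lemma fcfs_uniq (C S : finType) (E : C -> S -> bool) Mc Ms (befc : rel 'I_Mc) (befs : rel 'I_Ms) (c : 'I_Mc -> C) (s : 'I_Ms -> S)
  (B B' : {set 'I_Mc * 'I_Ms}) (wc : 'I_Mc -> nat) (ws : 'I_Ms -> nat) :
  (forall k m, befc k m -> wc k < wc m) -> (forall l n, befs l n -> ws l < ws n) ->
  (forall n n', n != n' -> befs n n' \/ befs n' n) ->
  (forall m m', m != m' -> befc m m' \/ befc m' m) ->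
  fcfs_wrt E befc befs c s B -> fcfs_wrt E befc befs c s B' -> B = B'.
Proof.
move=> hwc hws ts tc hB hB'.
suff H : forall N m n, wc m + ws n < N -> ((m,n) \in B) = ((m,n) \in B').
  by apply/setP => [[m n]]; apply: (H (wc m + ws n).+1).
elim => [//|N IH] m n hN.
have IH' : forall k l, wc k + ws l < wc m + ws n -> ((k,l)\in B) = ((k,l) \in B').
  move=> k l h; apply: IH; lia.
apply/idP/idP.
- exact: (@fcfs_uniq_dir _ _ E _ _ _ _ c s B B' wc ws hwc hws ts tc hB hB' m n IH').
- apply: (@fcfs_uniq_dir _ _ E _ _ _ _ c s B' B wc ws hwc hws ts tc hB' hB m n) => k l h; rewrite IH' //.
Qed.

Theorem lemma4p1 (C S : finType) (E : C -> S -> bool)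
  (hconn : bip_connected E) (M : nat)
  (c : 'I_M -> C) (s : 'I_M -> S) (A : {set 'I_M * 'I_M})
  (hA : fcfs E c s A) (hperf : perfect A)
  (ct : 'I_M -> C) (st : 'I_M -> S)
  (hex : forall m n, (m, n) \in A -> st m = s n /\ ct n = c m) :
  let At := [set (x.2, x.1) | x in A] in
  fcfs_rev E ct st At /\ perfect At /\
  (forall B : {set 'I_M * 'I_M}, fcfs_rev E ct st B -> B = At).
Proof.
move=> At.
have hAt : forall n m, ((n,m) \in At) = ((m,n) \in A) by move=> n m; apply: inAt.
case: hA => e f g x h.
case: hperf => p1 p2.
have hrev : fcfs_rev E ct st At.
  split.
  - move=> n m; rewrite hAt => hmn; have [-> ->] := hex _ _ hmn; exact: e.
  - move=> n m m'; rewrite !hAt => h1 h2; exact: (g _ _ _ h1 h2).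
  - move=> n n' m; rewrite !hAt => h1 h2; exact: (f _ _ _ h1 h2).
  - move=> n m _; left; have [m' hm] := p2 n; exists m'; by rewrite hAt.
  - move=> n m; rewrite hAt => hmn; have [hl hk] := h _ _ hmn; split.
    + move=> l /= hml; have [n' hl'] := p1 l.
      rewrite (hex _ _ hmn).2 (hex _ _ hl').1 => el.
      exists n'; rewrite hAt; split => //.
      case: (ltngtP n n') => // cmp.
      * have [k [hk1 hk2]] := hl n' cmp el.
        have eq := g _ _ _ hk2 hl'; subst; by rewrite ltnNge ltnW in hk1.
      * have eq : n = n' by apply: val_inj.
        subst; have eq := g _ _ _ hmn hl'; subst; by rewrite ltnn in hml.
    + move=> k /= hnk; have [m' hk'] := p2 k.
      rewrite (hex _ _ hmn).1 (hex _ _ hk').2 => ek.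
      exists m'; rewrite hAt; split => //.
      case: (ltngtP m m') => // cmp.
      * have [l [hl1 hl2]] := hk m' cmp ek.
        have eq := f _ _ _ hl2 hk'; subst; by rewrite ltnNge ltnW in hl1.
      * have eq : m = m' by apply: val_inj.
        subst; have eq := f _ _ _ hmn hk'; subst; by rewrite ltnn in hnk.
split => //; split.
  split.
  - move=> n; have [m hm] := p2 n; exists m; by rewrite hAt.
  - move=> m; have [n hn] := p1 m; exists n; by rewrite hAt.
move=> B hB.
have tot : forall a b : 'I_M, a != b -> b < a \/ a < b.
  move=> a b /eqP nab; case: (ltngtP a b) => cmp; [by right|by left|].
  by case: nab; apply: val_inj.
apply: (@fcfs_uniq _ _ E _ _ _ _ ct st B At (fun k : 'I_M => M - k) (fun k : 'I_M => M - k)) hB hrev.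
- move=> k m /= lt; have := ltn_ord k; lia.
- move=> k m /= lt; have := ltn_ord k; lia.
- exact: tot.
- exact: tot.
Qed.
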